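(* Let $\mathcal{P}$ be a finite set of passwords, $R_1,\dots,R_m\subseteq\mathcal{P}$ positive rules, and $\ell_1,\dots,\ell_n$ rankings of $\mathcal{P}$. Consider IterativeElimination: set $S_0=[m]$, $i=0$; while $S_i\neq\emptyset$, let $w(S_i)$ be a password maximizing $\Pr[w\mid\mathcal{A}_{S_i}]$ over $w\in\mathcal{A}_{S_i}$, set $S_{i+1}=S_i\setminus\{j : w(S_i)\in R_j\}$ and increase $i$; finally return $S_{i^*}$ where $i^*$ minimizes $p(1,\mathcal{A}_{S_i})$ over the nonempty sets $S_i$ produced. Then the returned set $S$ satisfies $p(1,\mathcal{A}_S)\le p(1,\mathcal{A}_{S'})$ for every $S'\subseteq[m]$ (with $\mathcal{A}_{S'}\ne\emptyset$).
   Context: Positive rules setting: for $S\subseteq[m]$, the policy is $\mathcal{A}_S=\bigcup_{i\in S}R_i$. Ranking model: user $i$, under policy $\mathcal{A}$, chooses the most preferred (according to $\ell_i$) password in $\mathcal{A}$; $\Pr[w\mid\mathcal{A}]=\frac1n|\{i: \text{user } i\text{ chooses } w\}|$. $p(1,\mathcal{A})=\max_{w\in\mathcal{A}}\Pr[w\mid\mathcal{A}]$, the probability of the most popular allowed password. *)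

(* Defs.v *)
From mathcomp Require Import all_boot all_order all_algebra.
Set Implicit Arguments. Unset Strict Implicit. Unset Printing Implicit Defensive.
Import Order.TTheory GRing.Theory Num.Theory.
Local Open Scope ring_scope.

(* User i's ranking l i : P -> nat is a rank function (lower = more preferred),
   required to be injective (a strict total order on P). *)
Section Defs.
Variables (P : finType) (m n : nat) (R : 'I_m -> {set P}) (l : 'I_n -> P -> nat).

Definition policy (S : {set 'I_m}) : {set P} := \bigcup_(j in S) R j.

Definition chooses (i : 'I_n) (A : {set P}) (w : P) : bool :=
  (w \in A) && [forall w', (w' \in A) ==> (l i w <= l i w')%N].

Definition Pr (w : P) (A : {set P}) : rat :=
  #|[set i | chooses i A w]|%:R / n%:R.

(* p(1, A) = max_{w in A} Pr[w | A]  (all values are >= 0) *)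
Definition p1 (A : {set P}) : rat := \big[Num.max/0]_(w in A) Pr w A.

Definition IE_run (s : nat -> {set 'I_m}) (k : nat) : Prop :=
  s 0%N = setT /\ s k = set0 /\
  forall i, (i < k)%N ->
    s i != set0 /\
    exists w, w \in policy (s i) /\
      (forall w', w' \in policy (s i) -> Pr w' (policy (s i)) <= Pr w (policy (s i))) /\
      s i.+1 = s i :\: [set j | w \in R j].

Definition IE_output (s : nat -> {set 'I_m}) (k : nat) (S : {set 'I_m}) : Prop :=
  exists2 i, (i < k)%N &
    S = s i /\ forall i', (i' < k)%N -> p1 (policy (s i)) <= p1 (policy (s i')).
End Defs.

(* Main.v *)
Require Import Defs.
From mathcomp Require Import all_boot all_order all_algebra.
Import Order.TTheory GRing.Theory Num.Theory.
Local Open Scope ring_scope.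

Section H.
Variables (P : finType) (m n : nat) (R : 'I_m -> {set P}) (l : 'I_n -> P -> nat).

Lemma Pr_ge0 (w : P) (A : {set P}) : 0 <= Pr l w A.
Proof. by rewrite /Pr divr_ge0 ?ler0n. Qed.

Lemma Pr_mono (w : P) (A B : {set P}) : B \subset A -> w \in B -> Pr l w A <= Pr l w B.
Proof.
move=> sBA wB; rewrite /Pr ler_wpM2r ?invr_ge0 ?ler0n // ler_nat.
apply: subset_leq_card; apply/subsetP => i; rewrite !inE => /andP[_ /forallP H].
rewrite /chooses wB /=; apply/forallP => w'; apply/implyP => w'B.
by have /implyP := H w'; apply; apply: (subsetP sBA).
Qed.

Lemma p1_ge (w : P) (A : {set P}) : w \in A -> Pr l w A <= p1 l A.
Proof.
move=> wA; rewrite /p1 (bigD1 w) //= le_max lexx //.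
Qed.

Lemma p1_le (w : P) (A : {set P}) : w \in A -> (forall w', w' \in A -> Pr l w' A <= Pr l w A) ->
  p1 l A <= Pr l w A.
Proof.
move=> wA H; rewrite /p1; elim/big_ind: _ => //.
- exact: Pr_ge0.
- by move=> x y hx hy; rewrite ge_max hx hy.
Qed.
End H.

Theorem theorem3p3 (P : finType) (m n : nat) (R : 'I_m -> {set P})
  (l : 'I_n -> P -> nat) (l_inj : forall i, injective (l i))
  (s : nat -> {set 'I_m}) (k : nat) (S : {set 'I_m}) :
  IE_run R l s k -> IE_output R l s k S ->
  forall S' : {set 'I_m}, policy R S' != set0 ->
    p1 l (policy R S) <= p1 l (policy R S').
Proof.
move=> [s0 [sk Hr]] [i0 i0k [-> Hmin]] S' nz.
have key : forall d j, (j + d = k)%N -> S' \subset s j ->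
    exists i, [/\ (i < k)%N, S' \subset s i & ~~ (S' \subset s i.+1)].
  elim=> [|d IH] j.
    rewrite addn0 => -> ; rewrite sk subset0 => /eqP E.
    by move: nz; rewrite E /policy big_set0 eqxx.
  move=> jd sj; have [sj1|nsj1] := boolP (S' \subset s j.+1).
    by apply: (IH j.+1) => //; rewrite addSnnS.
  by exists j; split => //; rewrite -jd addnS ltnS leq_addr.
have sT : S' \subset s 0%N by rewrite s0 subsetT.
have [i [ik si nsi1]] := key k 0%N (add0n _) sT.
have [_ [w [wA [wmax si1]]]] := Hr i ik.
have wS' : w \in policy R S'.
  move: nsi1; rewrite si1 => /subsetPn [j jS']; rewrite !inE (subsetP si _ jS') andbT negbK => wj.
  by apply/bigcupP; exists j.
have sub : policy R S' \subset policy R (s i).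
  apply/subsetP => x /bigcupP [j jS' xj]; apply/bigcupP; exists j => //.
  exact: (subsetP si).
apply: le_trans (Hmin i ik) _.
apply: le_trans (@p1_le _ _ l _ _ wA wmax) _.
apply: le_trans (@Pr_mono _ _ l _ _ _ sub wS') _.
exact: (@p1_ge _ _ l _ _ wS').
Qed.
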